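(* Let $c\in\{0,1\}^n$ and let $S_c$ be the set of all points of $\{0,1\}^n$ at Hamming distance exactly $1$ from $c$. Let $A\subseteq S_c$ with $|A|=\ell\ge 3$, and let $c_A=\frac{1}{|A|}\sum_{x\in A}x\in\mathbb R^n$ be its centroid. Then (a) $d(c_A,a)<1$ for every $a\in A$, and (b) $d(c_A,a)\ge 1$ for every $a\in\{0,1\}^n\setminus(A\cup\{c\})$, where $d$ is the Euclidean distance. *)

(* Defs.v *)
From HB Require Import structures.
From mathcomp Require Import all_boot all_order all_algebra.
From mathcomp Require Import reals.
Set Implicit Arguments. Unset Strict Implicit. Unset Printing Implicit Defensive.
Import Order.TTheory GRing.Theory Num.Theory.
Local Open Scope ring_scope.

Definition cube (n : nat) := {ffun 'I_n -> bool}.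

Definition hamming (n : nat) (x y : cube n) : nat := #|[set i | x i != y i]|.

Definition Sc (n : nat) (c : cube n) : {set cube n} :=
  [set x | hamming x c == 1%N].

Definition embed (R : realType) (n : nat) (x : cube n) : 'rV[R]_n :=
  \row_i (x i)%:R.

Definition centroid (R : realType) (n : nat) (A : {set cube n}) : 'rV[R]_n :=
  (#|A|%:R)^-1 *: \sum_(x in A) embed R x.

Definition edist (R : realType) (n : nat) (u v : 'rV[R]_n) : R :=
  Num.sqrt (\sum_(i < n) (u 0 i - v 0 i) ^+ 2).

(* Main.v *)
Require Import Defs.
From HB Require Import structures.
From mathcomp Require Import all_boot all_order all_algebra.
From mathcomp Require Import reals.
From mathcomp Require Import ring lra zify.
Import Order.TTheory GRing.Theory Num.Theory.
Set Implicit Arguments. Unset Strict Implicit.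
Local Open Scope ring_scope.

Lemma hamE n (x y : cube n) : hamming x y = (\sum_i (x i != y i : nat))%N.
Proof.
rewrite /hamming -sum1dep_card big_mkcond /=; apply: eq_bigr => i _.
by case: (_ != _).
Qed.

Lemma flip_eq n (c z : cube n) j : hamming z c = 1%N -> z j != c j ->
  forall i, i != j -> z i = c i.
Proof.
rewrite /hamming => /eqP/cards1P [k hk] hj i hij.
have jk : j = k by apply/set1P; rewrite -hk inE.
apply/eqP; apply: contraNT hij => hi.
have : i \in [set k] by rewrite -hk inE.
by rewrite inE jk.
Qed.

Lemma flip_uniq n (c x y : cube n) j : hamming x c = 1%N -> hamming y c = 1%N ->
  x j != c j -> y j != c j -> x = y.
Proof.
move=> hx hy xj yj; apply/ffunP => i.
have [->|ij] := eqVneq i j; last by rewrite (flip_eq hx xj ij) (flip_eq hy yj ij).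
by move: xj yj; case: (x j); case: (y j); case: (c j).
Qed.
Unset Implicit Arguments. Set Strict Implicit.

Theorem lemma4 (R : realType) (n : nat) (c : cube n) (A : {set cube n})
    (l : nat) (hAS : A \subset Sc c) (hcard : #|A| = l) (hl : (3 <= l)%N) :
  (forall a : cube n, a \in A -> edist (centroid R A) (embed R a) < 1) /\
  (forall a : cube n, a \notin A -> a != c ->
     1 <= edist (centroid R A) (embed R a)).
Proof.
have hA x : x \in A -> hamming x c = 1%N.
  by move=> xA; have := subsetP hAS x xA; rewrite inE => /eqP.
pose N i := (\sum_(x in A) (x i != c i : nat))%N.
have N1 i : (N i <= 1)%N.
  rewrite /N; have [x /andP [xA xi]|] := pickP [pred x | (x \in A) && (x i != c i)]; last first.
    by move=> h; rewrite big1 // => x xA; have := h x; rewrite /= xA /= => /negbFE ->.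
  rewrite (bigD1 x) //= xi big1 // => y /andP [yA yx].
  case: eqP => // /eqP yi.
  by move: yx; rewrite (flip_uniq (hA _ yA) (hA _ xA) yi xi) eqxx.
have sN : (\sum_i N i = l)%N.
  rewrite /N exchange_big /= -hcard -sum1_card; apply: eq_bigr => x xA.
  by rewrite -hamE hA.
have l0 : (l%:R : R) != 0 by rewrite pnatr_eq0 -lt0n; apply: leq_trans hl.
have cent i : centroid R A 0 i = l%:R^-1 * \sum_(x in A) ((x i : nat)%:R).
  by rewrite /centroid mxE summxE hcard; congr (_ * _); apply: eq_bigr => x _; rewrite mxE.
have Sx i : \sum_(x in A) (((x i : nat)%:R) : R) = l%:R * (c i : nat)%:R + (1 - 2 * (c i : nat)%:R) * (N i)%:R.
  rewrite /N natr_sum mulr_sumr -hcard -sumr_const.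
  rewrite mulr_suml -big_split /=.
  by apply: eq_bigr => x _; case: (x i); case: (c i) => /=; ring.
have hterm (b : cube n) i : (centroid R A 0 i - embed R b 0 i)^+2 = (l%:R^-1 * (N i)%:R - (b i != c i : nat)%:R)^+2.
  rewrite cent Sx mxE; by case: (b i); case: (c i) => /=; field; exact: l0.
have Q : forall b : cube n, \sum_i (centroid R A 0 i - embed R b 0 i)^+2 =
    l%:R^-1 - 2 * l%:R^-1 * (\sum_i N i * (b i != c i : nat))%N%:R + (\sum_i (b i != c i : nat))%N%:R.
  move=> b; rewrite (eq_bigr _ (fun i _ => hterm b i)).
  rewrite (eq_bigr (fun i => l%:R^-1^+2 * (N i)%:R - 2 * l%:R^-1 * (N i * (b i != c i : nat))%:R + ((b i != c i : nat))%:R)); last first.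
    move=> i _; move: (N1 i); case: (N i) => [|[|//]] _; case: (_ != _) => /=; ring.
  rewrite !big_split /= sumrN -!mulr_sumr -!natr_sum sN; field; exact: l0.
have kh (b : cube n) : (\sum_i N i * (b i != c i : nat) <= \sum_i (b i != c i : nat))%N.
  apply: leq_sum => i _; move: (N1 i); case: (N i) => [|[|//]] _; rewrite ?mul0n ?mul1n //.
have Npos i (x : cube n) : x \in A -> x i != c i -> (0 < N i)%N.
  by move=> xA xi; rewrite /N (bigD1 x) //= xi.
have Lpos : (0 : R) < l%:R by rewrite ltr0n; apply: leq_trans hl.
split.
- move=> a aA; rewrite /edist Q.
  have ha := hA a aA; move: (ha); rewrite /hamming => /eqP/cards1P [j hj].
  have aj : a j != c j by move: (set11 j); rewrite -hj inE.
  have hh : (\sum_i (a i != c i : nat))%N = 1%N by rewrite -hamE.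
  have hk : (\sum_i N i * (a i != c i : nat))%N = 1%N.
    apply/eqP; rewrite eqn_leq -{1}hh kh /= (bigD1 j) //= aj muln1.
    apply: leq_trans (leq_addr _ _); exact: Npos aA aj.
  rewrite -[X in _ < X]sqrtr1 ltr_sqrt // hk hh.
  have : 0 < l%:R^-1 :> R by rewrite invr_gt0.
  rewrite /=; lra.
- move=> a aA ac; rewrite /edist Q.
  set h := (\sum_i (a i != c i : nat))%N.
  set k := (\sum_i N i * (a i != c i : nat))%N.
  have hk : (k <= h)%N := kh a.
  have h1 : (1 <= h)%N.
    rewrite lt0n; apply: contraNneq ac => /eqP h0; apply/eqP/ffunP => i.
    move: h0; rewrite /h sum_nat_eq0 => /forallP /(_ i) /implyP /(_ isT).
    by case: (a i); case: (c i).
  have hk1 : h = 1%N -> k = 0%N.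
    move=> hh; apply/eqP; rewrite /k sum_nat_eq0; apply/forallP => i; apply/implyP => _.
    rewrite muln_eq0; apply/orP; case: (boolP (a i != c i)) => ai; last by right.
    left; rewrite /N sum_nat_eq0; apply/forallP => x; apply/implyP => xA.
    case: (boolP (x i != c i)) => xi //.
    have hac : hamming a c = 1%N by rewrite hamE.
    by move: aA; rewrite -(flip_uniq (hA x xA) hac xi ai) xA.
  have key : (l + 2 * k <= 1 + l * h)%N.
    have [hh|hh] := eqVneq h 1%N; first by rewrite (hk1 hh) hh; lia.
    nia.
  suff H1 : 1 <= l%:R^-1 - 2 * l%:R^-1 * k%:R + h%:R :> R.
    by rewrite -[X in X <= _]sqrtr1 ler_sqrt // (le_trans ler01 H1).
  have -> : l%:R^-1 - 2 * l%:R^-1 * k%:R + h%:R = (1 + l%:R * h%:R - 2 * k%:R) / (l%:R : R).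
    by field; exact: l0.
  rewrite ler_pdivlMr // mul1r.
  move: key; rewrite -(ler_nat R) !natrD !natrM /=; lra.
Qed.
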